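(* Let $A_1,A_2\subseteq A$ be nonempty and disjoint, $q\in Atom$, $\eta\in\{\mu,\nu\}$ and $\eta q.\varphi\in\mathcal L^\mu_{CC}$. If $M,s\succeq^{q}_{(A_1,A_2)}N,t$ and $N,t\models\eta q.\varphi$, then $M,s\models\exists_{(A_1,A_2)}\eta q.\varphi$.
   Context: Fix a finite set $A$ of actions and a countably infinite set $Atom$ of propositional letters. A model is $M=\langle S^M,R^M,V^M\rangle$ with $S^M\neq\emptyset$ a set of states, $R^M_b\subseteq S^M\times S^M$ for each $b\in A$, and $V^M:Atom\to 2^{S^M}$. A pointed model is $(M,s)$ with $s\in S^M$. Refinements: given $P\subseteq Atom$ and disjoint $A_1,A_2\subseteq A$, a relation $\mathcal Z\subseteq S^M\times S^{M'}$ is a $P$-restricted $(A_1,A_2)$-refinement between $M$ and $M'$ if for every pair $u\mathcal Z u'$: (atoms) $u\in V^M(r)$ iff $u'\in V^{M'}(r)$ for all $r\in Atom\setminus P$; (forth) for every $a\in A\setminus A_2$ and every $v$ with $uR^M_a v$ there is $v'$ with $u'R^{M'}_a v'$ and $v\mathcal Z v'$; (back) for every $a\in A\setminus A_1$ and every $v'$ with $u'R^{M'}_a v'$ there is $v$ with $uR^M_a v$ and $v\mathcal Z v'$. Write $M,u\succeq^P_{(A_1,A_2)}M',u'$ if such a $\mathcal Z$ exists with $u\mathcal Z u'$; the superscript is omitted when $P=\emptyset$, and $\{q\}$ is written $q$. Language $\mathcal L^\mu_{CC}$: $\varphi::= r\mid\neg\varphi\mid\varphi\wedge\varphi\mid\Box_b\varphi\mid\exists_{(A_1,A_2)}\varphi\mid\mu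 q.\varphi$, where $r,q\in Atom$, $b\in A$, $A_1,A_2\subseteq A$ are nonempty and disjoint, and in $\mu q.\varphi$ the letter $q$ occurs only positively (under an even number of negations) in $\varphi$. Abbreviation: $\nu q.\varphi=\neg\mu q.\neg\varphi[\neg q/q]$. Semantics: $M,u\models r$ iff $u\in V^M(r)$; Boolean clauses as usual; $M,u\models\Box_b\varphi$ iff $M,v\models\varphi$ for all $v$ with $uR^M_bv$; $M,u\models\exists_{(A_1,A_2)}\varphi$ iff there is a pointed model $(N,v)$ with $M,u\succeq_{(A_1,A_2)}N,v$ and $N,v\models\varphi$; $M,u\models\mu q.\varphi$ iff $u\in\bigcap\{T\subseteq S^M:\|\varphi\|^{M[q\mapsto T]}\subseteq T\}$, where $\|\varphi\|^M=\{s:M,s\models\varphi\}$ and $M[q\mapsto T]$ is $M$ with $V(q)$ replaced by $T$. *)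

(* Defs.v *)
From mathcomp Require Import all_boot all_order.
Unset Implicit Arguments.

Section Logic.
Variable Act : finType.

Record model := Model {
  St : Type;
  St_inh : inhabited St;
  Rel : Act -> St -> St -> Prop;
  Val : nat -> St -> Prop }.




Definition is_refinement (P : nat -> Prop) (A1 A2 : {set Act})
  (M M' : model) (Z : St M -> St M' -> Prop) : Prop :=
  forall u u', Z u u' ->
    (forall r, ~ P r -> (Val M r u <-> Val M' r u')) /\
    (forall a, a \notin A2 -> forall v, Rel M a u v ->
        exists v', Rel M' a u' v' /\ Z v v') /\
    (forall a, a \notin A1 -> forall v', Rel M' a u' v' ->
        exists v, Rel M a u v /\ Z v v').

Definition refines (P : nat -> Prop) (A1 A2 : {set Act})
  (M : model) (u : St M) (M' : model) (u' : St M') : Prop :=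
  exists Z, is_refinement P A1 A2 M M' Z /\ Z u u'.

Inductive form : Type :=
| FVar : nat -> form
| FNeg : form -> form
| FAnd : form -> form -> form
| FBox : Act -> form -> form
| FEx  : {set Act} -> {set Act} -> form -> form
| FMu  : nat -> form -> form.

(* all free occurrences of q in phi have polarity [pol] (true = positive) *)
Fixpoint occ_pol (q : nat) (pol : bool) (phi : form) : Prop :=
  match phi with
  | FVar r => r = q -> pol = true
  | FNeg p => occ_pol q (~~ pol) p
  | FAnd p1 p2 => occ_pol q pol p1 /\ occ_pol q pol p2
  | FBox _ p => occ_pol q pol p
  | FEx _ _ p => occ_pol q pol p
  | FMu r p => if r == q then True else occ_pol q pol p
  end.

Definition positive_in (q : nat) (phi : form) : Prop := occ_pol q true phi.

Fixpoint wf (phi : form) : Prop :=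
  match phi with
  | FVar _ => True
  | FNeg p => wf p
  | FAnd p1 p2 => wf p1 /\ wf p2
  | FBox _ p => wf p
  | FEx A1 A2 p => A1 != set0 /\ A2 != set0 /\ [disjoint A1 & A2] /\ wf p
  | FMu q p => positive_in q p /\ wf p
  end.

(* phi[psi/q] for free occurrences of q (psi will only contain q free) *)
Fixpoint subst (q : nat) (psi : form) (phi : form) : form :=
  match phi with
  | FVar r => if r == q then psi else FVar r
  | FNeg p => FNeg (subst q psi p)
  | FAnd p1 p2 => FAnd (subst q psi p1) (subst q psi p2)
  | FBox b p => FBox b (subst q psi p)
  | FEx A1 A2 p => FEx A1 A2 (subst q psi p)
  | FMu r p => if r == q then FMu r p else FMu r (subst q psi p)
  end.

Definition FNu (q : nat) (phi : form) : form :=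
  FNeg (FMu q (FNeg (subst q (FNeg (FVar q)) phi))).

Definition FFix (eta : bool) (q : nat) (phi : form) : form :=
  if eta then FMu q phi else FNu q phi.

Definition update (M : model) (q : nat) (T : St M -> Prop) : model :=
  @Model (St M) (St_inh M) (Rel M) (fun r => if r == q then T else Val M r).

Fixpoint sat (phi : form) : forall M : model, St M -> Prop :=
  match phi with
  | FVar r => fun M u => Val M r u
  | FNeg p => fun M u => ~ sat p M u
  | FAnd p1 p2 => fun M u => sat p1 M u /\ sat p2 M u
  | FBox b p => fun M u => forall v, Rel M b u v -> sat p M v
  | FEx A1 A2 p => fun M u =>
      exists (N : model) (v : St N), refines (fun _ => False) A1 A2 M u N v /\ sat p N v
  | FMu q p => fun M u =>
      forall T : St M -> Prop,
        (forall w, sat p (update M q T) w -> T w) -> T u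
  end.

End Logic.

Arguments St {Act}.
Arguments FVar {Act}. Arguments FNeg {Act}. Arguments FAnd {Act}.
Arguments FBox {Act}. Arguments FEx {Act}. Arguments FMu {Act}.
Arguments FNu {Act}. Arguments FFix {Act}. Arguments wf {Act}.
Arguments sat {Act}. Arguments refines {Act}. Arguments positive_in {Act}.
Arguments subst {Act}. Arguments update {Act}.

(* Main.v *)
Require Import Defs.
From mathcomp Require Import all_boot all_order.

Section Aux.
Variable Act : finType.

Definition bmorph (M N : model Act) (f : St M -> St N) :=
  (forall a x y, Rel _ M a x y -> Rel _ N a (f x) (f y)) /\
  (forall a x v, Rel _ N a (f x) v -> exists y, Rel _ M a x y /\ f y = v).

Definition CC (phi : form Act) (a b : nat -> Prop) :=
  forall r, (occ_pol Act r false phi \/ a r) /\ (occ_pol Act r true phi \/ b r).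

Definition okp (X K : model Act) (W : St X -> St K -> Prop)
  (p : option (St X) * St K) : Prop :=
  match p.1 with Some x => W x p.2 | None => True end.

Definition pSt (X K : model Act) W := {p : option (St X) * St K | okp X K W p}.

Definition pRel (A1 : {set Act}) (X K : model Act) W (a : Act)
  (p p' : pSt X K W) : Prop :=
  Rel _ K a (sval p).2 (sval p').2 /\
  match (sval p).1, (sval p').1 with
  | Some x, Some x' => Rel _ X a x x'
  | Some _, None => a \in A1
  | None, None => True
  | None, Some _ => False
  end.

Definition pVal (X K : model Act) W (r : nat) (p : pSt X K W) : Prop :=
  match (sval p).1 with Some x => Val _ X r x | None => Val _ K r (sval p).2 end.

Definition pinh (X K : model Act) W : inhabited (pSt X K W) :=
  match St_inh _ K with inhabits k => inhabits (exist _ (None, k) I) end.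

Definition prodM A1 X K W : model Act :=
  @Model Act (pSt X K W) (pinh X K W) (pRel A1 X K W) (pVal X K W).

Definition wref (A1 A2 : {set Act}) (X K : model Act) (W : St X -> St K -> Prop) :=
  forall u k, W u k ->
    (forall a, a \notin A2 -> forall v, Rel _ X a u v ->
        exists v', Rel _ K a k v' /\ W v v') /\
    (forall a, a \notin A1 -> forall v', Rel _ K a k v' ->
        exists v, Rel _ X a u v /\ W v v').

Lemma prod_ref A1 A2 X K W (hW : wref A1 A2 X K W) x k (H : W x k) :
  refines (fun _ => False) A1 A2 X x (prodM A1 X K W) (exist _ (Some x, k) H).
Proof.
exists (fun u (p : pSt X K W) => (sval p).1 = Some u); split; last by [].
move=> u [[y k'] Hp] /= E; subst y; split.
- by move=> r _; rewrite /= /pVal /=.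
split.
- move=> a Ha v Huv. have [h1 _] := hW _ _ Hp.
  have [v' [Hkv Wv]] := h1 a Ha v Huv.
  by exists (exist _ (Some v, v') Wv); split => //; split.
- move=> a Ha [[[v|] v'] Hv] [/= Hk Hr].
  + by exists v; split.
  + by rewrite Hr in Ha.
Qed.

Lemma prod_morph A1 A2 X K W (hW : wref A1 A2 X K W) :
  bmorph (prodM A1 X K W) K (fun p => (sval p).2).
Proof.
split.
- by move=> a x y [].
- move=> a [[[u|] k] Hp] v /= Hkv.
  + case hA: (a \in A1).
    * by exists (exist _ (None, v) I); split => //; split => //=.
    * have [_ h2] := hW _ _ Hp.
      have [w [Huw Ww]] := h2 a (negbT hA) v Hkv.
      by exists (exist _ (Some w, v) Ww); split => //; split.
  + by exists (exist _ (None, v) I); split => //; split.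
Qed.

Arguments prod_morph {A1 A2 X K W}.

Lemma transfer (phi : form Act) : wf phi ->
  forall (M N : model Act) (f : St M -> St N) (a b : nat -> Prop),
  bmorph M N f ->
  (forall r x, a r -> Val _ N r (f x) -> Val _ M r x) ->
  (forall r x, b r -> Val _ M r x -> Val _ N r (f x)) ->
  (CC phi a b -> forall x, sat phi N (f x) -> sat phi M x) /\
  (CC phi b a -> forall x, sat phi M x -> sat phi N (f x)).
Proof.
elim: phi.
- move=> r _ M N f a b _ ha hb; split.
  + move=> C x /= Hv; have [[H|H] _] := C r; first by have := H erefl.
    exact: ha.
  + move=> C x /= Hv; have [[H|H] _] := C r; first by have := H erefl.
    exact: hb.
- move=> p IH /= hw M N f a b hf ha hb.
  have [I1 I2] := IH hw M N f a b hf ha hb; split.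
  + move=> C x H1 H2; apply: H1; apply: I2 => // r.
    by have [h1 h2] := C r; split.
  + move=> C x H1 H2; apply: H1; apply: I1 => // r.
    by have [h1 h2] := C r; split.
- move=> p1 IH1 p2 IH2 /= [w1 w2] M N f a b hf ha hb.
  have [I1 I2] := IH1 w1 M N f a b hf ha hb.
  have [J1 J2] := IH2 w2 M N f a b hf ha hb; split.
  + move=> C x [H1 H2]; split; [apply: I1 | apply: J1] => // r;
    have := C r; rewrite /=; tauto.
  + move=> C x [H1 H2]; split; [apply: I2 | apply: J2] => // r;
    have := C r; rewrite /=; tauto.
- move=> c p IH /= hw M N f a b hf ha hb.
  have [I1 I2] := IH hw M N f a b hf ha hb; split.
  + move=> C x H v Hv; apply: I1 => //; apply: H; exact: hf.1.
  + move=> C x H v Hv; have [y [Hy <-]] := hf.2 _ _ _ Hv.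
    apply: I2 => //; exact: H.
- move=> B1 B2 p IH /= [_ [_ [_ hw]]] M N f a b hf ha hb; split.
  + move=> C x [K [k [[Z [hZ Zk]] Hs]]].
    pose W := fun u k => Z (f u) k.
    have hW : wref B1 B2 M K W.
      move=> u k' Wk; have [_ [h1 h2]] := hZ _ _ Wk; split.
      * move=> c Hc v Huv; exact: h1 c Hc _ (hf.1 _ _ _ Huv).
      * move=> c Hc v' Hv'; have [n [Hn Zn]] := h2 c Hc _ Hv'.
        have [y [Hy Ey]] := hf.2 _ _ _ Hn; exists y; split => //.
        by rewrite /W Ey.
    exists (prodM B1 M K W), (exist _ (Some x, k) Zk); split.
      exact: prod_ref.
    have HA : forall r (y : St (prodM B1 M K W)), a r ->
        Val _ K r (sval y).2 -> Val _ (prodM B1 M K W) r y.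
      move=> r [[[u|] k'] Hp] ar /= H; rewrite /pVal /=; last by [].
      apply: ha => //; have [ht _] := hZ _ _ Hp; by apply/ht.
    have HB : forall r (y : St (prodM B1 M K W)), b r ->
        Val _ (prodM B1 M K W) r y -> Val _ K r (sval y).2.
      move=> r [[[u|] k'] Hp] br /=; rewrite /pVal /=; last by [].
      move=> H; have [ht _] := hZ _ _ Hp; apply/(ht r id); exact: hb.
    have [I1 _] := IH hw (prodM B1 M K W) K _ a b (prod_morph hW) HA HB.
    have C' : CC p a b := C. exact (I1 C' (exist _ (Some x, k) Zk) Hs).
  + move=> C x [K [k [[Z [hZ Zk]] Hs]]].
    pose W := fun n k => exists u, f u = n /\ Z u k.
    have hW : wref B1 B2 N K W.
      move=> n k' [u [<- Wk]]; have [_ [h1 h2]] := hZ _ _ Wk; split.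
      * move=> c Hc v Huv; have [y [Hy <-]] := hf.2 _ _ _ Huv.
        have [v' [Hv' Zv]] := h1 c Hc _ Hy; exists v'; split => //.
        by exists y.
      * move=> c Hc v' Hv'; have [y [Hy Zy]] := h2 c Hc _ Hv'.
        exists (f y); split; [exact: hf.1 | by exists y].
    have Wx : W (f x) k by exists x.
    exists (prodM B1 N K W), (exist _ (Some (f x), k) Wx); split.
      exact: prod_ref.
    have HA : forall r (y : St (prodM B1 N K W)), b r ->
        Val _ K r (sval y).2 -> Val _ (prodM B1 N K W) r y.
      move=> r [[[u|] k'] Hp] br /= H; rewrite /pVal /=; last by [].
      case: Hp => y [<- Zy]; apply: hb => //.
      have [ht _] := hZ _ _ Zy; by apply/(ht r id).
    have HB : forall r (y : St (prodM B1 N K W)), a r ->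
        Val _ (prodM B1 N K W) r y -> Val _ K r (sval y).2.
      move=> r [[[u|] k'] Hp] ar /=; rewrite /pVal /=; last by [].
      case: Hp => y [<- Zy] H; have [ht _] := hZ _ _ Zy; apply/(ht r id).
      exact: ha.
    have [I1 _] := IH hw (prodM B1 N K W) K _ b a (prod_morph hW) HA HB.
    have C' : CC p b a := C. exact (I1 C' (exist _ (Some (f x), k) Wx) Hs).
- move=> r p IH /= [hpos hw] M N f a b hf ha hb; split.
  + move=> C x H T HT.
    pose T' := fun y => forall x, f x = y -> T x.
    apply: (H T') => //.
    move=> w Hw x' Ex'; apply: HT.
    have HA : forall r' y, (r' = r \/ a r') ->
        Val _ (update N r T') r' (f y) -> Val _ (update M r T) r' y.
      move=> r' y /=; case: eqP => [-> _ Hy|ne [//|ar]]; first exact: Hy.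
      exact: ha.
    have HB : forall r' y, (r' <> r /\ b r') ->
        Val _ (update M r T) r' y -> Val _ (update N r T') r' (f y).
      move=> r' y /=; case: eqP => [-> [] //|ne [_ br]]; exact: hb.
    have [I1 _] := IH hw (update M r T) (update N r T') f _ _ hf HA HB.
    apply: I1; last by rewrite Ex'.
    move=> r'; case: (eqVneq r' r) => [->|ne].
    * by split; [right; left | left].
    * have [h1 h2] := C r'; move: h1 h2 => /=; rewrite eq_sym (negbTE ne).
      move=> h1 h2; have ne' : r' <> r by apply/eqP. tauto.
  + move=> C x H T HT.
    apply: (H (fun y => T (f y))).
    move=> w Hw; apply: HT.
    have HA : forall r' y, (r' = r \/ b r') ->
        Val _ (update M r (fun y => T (f y))) r' y -> Val _ (update N r T) r' (f y).
      move=> r' y /=; case: eqP => [-> _ //|ne [//|br]]; exact: hb.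
    have HB : forall r' y, (r' = r \/ a r') ->
        Val _ (update N r T) r' (f y) -> Val _ (update M r (fun y => T (f y))) r' y.
      move=> r' y /=; case: eqP => [-> _ //|ne [//|ar]]; exact: ha.
    have [_ I2] := IH hw (update M r (fun y => T (f y))) (update N r T) f _ _ hf HB HA.
    apply: I2 => //.
    move=> r'; case: (eqVneq r' r) => [->|ne].
    * by split; right; left.
    * have [h1 h2] := C r'; move: h1 h2 => /=; rewrite eq_sym (negbTE ne).
      tauto.
Qed.

End Aux.
Arguments prod_morph {Act A1 A2 X K W}.
Arguments transfer {Act phi}.

Theorem mainTheorem16 (Act : finType) (A1 A2 : {set Act})
  (hA1 : A1 != set0) (hA2 : A2 != set0) (hdis : [disjoint A1 & A2])
  (q : nat) (eta : bool) (phi : form Act)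
  (hwf : wf (FFix eta q phi))
  (M N : model Act) (s : St M) (t : St N)
  (href : refines (fun r => r = q) A1 A2 M s N t)
  (hsat : sat (FFix eta q phi) N t) :
  sat (FEx A1 A2 (FFix eta q phi)) M s.
Proof.
case: href => Z [hZ Zst].
have hW : wref Act A1 A2 M N Z.
  by move=> u k Hk; have [_ h] := hZ _ _ Hk.
exists (prodM Act A1 M N Z), (exist _ (Some s, t) Zst); split.
  exact: prod_ref.
have HA : forall r (y : St (prodM Act A1 M N Z)), r <> q ->
    Val _ N r (sval y).2 -> Val _ (prodM Act A1 M N Z) r y.
  move=> r [[[u|] k'] Hp] ar /= H; rewrite /pVal /=; last by [].
  have [ht _] := hZ _ _ Hp; by apply/(ht r ar).
have HB : forall r (y : St (prodM Act A1 M N Z)), r <> q ->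
    Val _ (prodM Act A1 M N Z) r y -> Val _ N r (sval y).2.
  move=> r [[[u|] k'] Hp] ar /=; rewrite /pVal /=; last by [].
  move=> H; have [ht _] := hZ _ _ Hp; by apply/(ht r ar).
have [I1 _] := transfer hwf _ _ _ (fun r => r <> q) (fun r => r <> q)
   (prod_morph hW) HA HB.
apply: (I1 _ (exist _ (Some s, t) Zst) hsat).
move=> r; case: (eqVneq r q) => [->|ne].
- by case: eta {hwf hsat I1} => /=; rewrite eqxx; split; left.
- by split; right; apply/eqP.
Qed.
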